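(* For every pair of binary hypothesis classes $S,B\subseteq\{-1,1,*\}^X$ and every $n\in\mathbb{Z}_{>0}$, let $m:=\mathsf{Ldim}(S,B)$ and $\varepsilon^*:=\inf\{\varepsilon\ge0:\mathsf{CompOL}_n(S,B,\varepsilon)\ne\emptyset\}$. Then \[ \min\left\{\frac12,\frac m{2n}\right\}\le\varepsilon^*\le O\!\left(\sqrt{\frac mn\log\frac{2m+n}m}\right). \]
   Context: An online learner $L$ processes a sequence $(x_1,y_1),\dots,(x_n,y_n)\in X\times\{-1,1\}$: for each $i$, given $(x_1,y_1),\dots,(x_{i-1},y_{i-1})$ and $x_i$, it outputs a (possibly random) prediction $\hat y_i\in\{-1,1\}$. Define $\mathsf{mistake}(L;(x_i,y_i)_{i=1}^n)=\frac1n\sum_i\Pr[\hat y_i\ne y_i]$ and, for $h:X\to\{-1,1,*\}$, $\mathsf{mistake}(h;(x_i,y_i)_{i=1}^n)=\frac1n\sum_i\mathbf{1}(h(x_i)\ne y_i)$. $\mathsf{CompOL}_n(S,B,\varepsilon)$ is the set of online learners $L$ such that for every $s\in S$ and every sequence with $y_i=s(x_i)$ for all $i$, $\mathsf{mistake}(L;\cdot)\le\inf_{b\in B}\mathsf{mistake}(b;\cdot)+\varepsilon$. A family $(x_\zeta)_{\zeta\in\bigcup_{i=0}^{m-1}\{-1,1\}^i}$ of points of $X$ (a complete binary tree of depth $m$) is shattered by $H$ if for every $\xi=(\xi_1,\dots,\xi_m)\in\{-1,1\}^m$ there is $h\in H$ with $h(x_{\xi_{<i}})=\xi_i$ for all $i=1,\dots,m$,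 where $\xi_{<i}$ is the length-$(i-1)$ prefix. The mutual Littlestone dimension $\mathsf{Ldim}(S,B)$ is the sup of $m\ge0$ such that some such family is shattered by both $S$ and $B$. The case $m=0$ in the upper bound is read with the convention that the bound is $0$. $\log$ base 2. *)

(* Defs.v *)
From HB Require Import structures.
From mathcomp Require Import all_boot all_order all_algebra.
From mathcomp Require Import all_classical all_reals all_analysis.
From mathcomp Require Import Rstruct Rstruct_topology.
Set Implicit Arguments. Unset Strict Implicit. Unset Printing Implicit Defensive.
Import Order.TTheory GRing.Theory Num.Theory.
Local Open Scope classical_set_scope.
Local Open Scope ring_scope.

(* Labels: [true] = +1, [false] = -1.  Partial hypotheses X -> {-1,1,*}:
   [Some b] is the label b, [None] is *. *)
Definition hyp (X : Type) := X -> option bool.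

(* An online learner: given the history (x_1,y_1),...,(x_{i-1},y_{i-1}) and x_i,
   it returns Pr[\hat y_i = +1]. *)
Definition learner (X : Type) := seq (X * bool) -> X -> Rdefinitions.R.

Definition is_learner (X : Type) (L : learner X) : Prop :=
  forall hist x, 0 <= L hist x <= 1.

Definition err (p : Rdefinitions.R) (y : bool) : Rdefinitions.R :=
  if y then 1 - p else p.

Fixpoint cumloss (X : Type) (L : learner X) (hist s : seq (X * bool))
  : Rdefinitions.R :=
  match s with
  | [::] => 0
  | (x, y) :: s' => err (L hist x) y + cumloss L (rcons hist (x, y)) s'
  end.

Definition mistakeL (X : Type) (L : learner X) (s : seq (X * bool))
  : Rdefinitions.R :=
  cumloss L [::] s / (size s)%:R.

Definition mistakeH (X : Type) (h : hyp X) (s : seq (X * bool))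
  : Rdefinitions.R :=
  (\sum_(p <- s) (if h p.1 == Some p.2 then 0 else 1)) / (size s)%:R.

Definition CompOL (X : Type) (n : nat) (S B : set (hyp X)) (eps : Rdefinitions.R)
  (L : learner X) : Prop :=
  is_learner L /\
  forall (s : hyp X) (sq : seq (X * bool)),
    S s -> size sq = n -> List.Forall (fun p => s p.1 = Some p.2) sq ->
    ((mistakeL L sq)%:E <=
       ereal_inf [set (mistakeH b sq)%:E | b in B] + eps%:E)%E.

(* complete binary tree of depth m: points x_zeta, zeta in U_{i<m} {-1,1}^i *)
Definition tree (X : Type) (m : nat) := forall i : 'I_m, i.-tuple bool -> X.

Definition prefix (m : nat) (xi : m.-tuple bool) (i : 'I_m) : i.-tuple bool :=
  [tuple tnth xi (widen_ord (ltnW (ltn_ord i)) j) | j < i].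

Definition shattered (X : Type) (m : nat) (H : set (hyp X)) (t : tree X m) : Prop :=
  forall xi : m.-tuple bool, exists2 h, H h &
    forall i : 'I_m, h (t i (prefix xi i)) = Some (tnth xi i).

(* mutual Littlestone dimension, as an extended real (sup of empty set = -oo,
   +oo if unbounded) *)
Definition Ldim (X : Type) (S B : set (hyp X)) : \bar Rdefinitions.R :=
  ereal_sup [set ((m%:R : Rdefinitions.R)%:E) | m in
              [set m : nat | exists t : tree X m, shattered S t /\ shattered B t]].

Definition epsstar (X : Type) (n : nat) (S B : set (hyp X)) : Rdefinitions.R :=
  inf [set eps : Rdefinitions.R | 0 <= eps /\ exists L, CompOL n S B eps L].

Definition log2 (x : Rdefinitions.R) : Rdefinitions.R := ln x / ln 2.

(* Main.v *)
Require Import Defs.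
From HB Require Import structures.
From mathcomp Require Import all_boot all_order all_algebra.
From mathcomp Require Import all_classical all_reals all_analysis.
From mathcomp Require Import Rstruct Rstruct_topology.
From mathcomp Require Import zify ring lra.
Set Implicit Arguments. Unset Strict Implicit. Unset Printing Implicit Defensive.
Import Order.TTheory GRing.Theory Num.Theory.
Local Open Scope classical_set_scope.
Local Open Scope ring_scope.

Section Comb.
Variable X : Type.
Implicit Types V W : set (hyp X).

Definition shatg V j (g : 'I_j -> seq bool -> X) : Prop :=
  forall xi : seq bool, size xi = j -> exists2 h, V h &
    forall i : 'I_j, h (g i (take i xi)) = Some (nth false xi i).
Definition Dg V W j := exists g : 'I_j -> seq bool -> X, shatg V g /\ shatg W g.
Definition rst V x y : set (hyp X) := [set h | V h /\ h x = Some y].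

Lemma Dg_mono V W V' W' j : V `<=` V' -> W `<=` W' -> Dg V W j -> Dg V' W' j.
Proof.
move=> sV sW [g [hV hW]]; exists g; split.
  by move=> xi sx; have [h Vh Hh] := hV xi sx; exists h => //; exact: sV.
by move=> xi sx; have [h Vh Hh] := hW xi sx; exists h => //; exact: sW.
Qed.

Lemma Dg0 V W h1 h2 : V h1 -> W h2 -> Dg V W 0.
Proof.
move=> V1 W2.
have g : 'I_0 -> seq bool -> X by case.
by exists g; split => xi _; [exists h1|exists h2] => // -[].
Qed.

Lemma shat_comb V x j (g1 g2 : 'I_j -> seq bool -> X) :
  shatg (rst V x false) g1 -> shatg (rst V x true) g2 ->
  shatg V (fun (i : 'I_j.+1) s => match unlift ord0 i with
                    | None => x
                    | Some i' => if head false s then g2 i' (behead s) else g1 i' (behead s)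
                    end).
Proof.
move=> h1 h2 [|y xi] //= [sx].
have [h [Vh hx] Hh] := (if y as b return (exists2 h, rst V x b h & forall i : 'I_j, h ((if b then g2 else g1) i (take i xi)) = Some (nth false xi i)) then h2 xi sx else h1 xi sx).
exists h => // i.
case: (unliftP ord0 i) => [i'|] -> /=.
  by case: y Hh hx => Hh _; rewrite Hh.
by rewrite hx.
Qed.

Lemma Dg_comb V W x j :
  Dg (rst V x false) (rst W x false) j -> Dg (rst V x true) (rst W x true) j ->
  Dg V W j.+1.
Proof.
move=> [g1 [a1 b1]] [g2 [a2 b2]]; eexists; split; [exact: (shat_comb a1 a2)|exact: (shat_comb b1 b2)].
Qed.

Lemma D_Dg V W j : (exists t : tree X j, shattered V t /\ shattered W t) -> Dg V W j.
Proof.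
move=> [t [hV hW]].
exists (fun i s => t i [tuple nth false s u | u < i]).
have key : forall H, shattered H t -> shatg H (fun i s => t i [tuple nth false s u | u < i]).
  move=> H hH xi sx.
  have [h Hh Eh] := hH [tuple nth false xi u | u < j].
  exists h => // i; move: (Eh i); rewrite tnth_mktuple => <-; congr (h (t i _)).
  apply: eq_from_tnth => u; rewrite /Defs.prefix !tnth_mktuple /= nth_take //.
by split; apply: key.
Qed.

Lemma Dg_D V W j : Dg V W j -> (exists t : tree X j, shattered V t /\ shattered W t).
Proof.
move=> [g [hV hW]]; exists (fun i z => g i (val z)).
have key : forall H, shatg H g -> shattered H (fun i z => g i (val z)).
  move=> H hH xi.
  have [h Hh Eh] := hH (val xi) (size_tuple xi).
  exists h => // i; rewrite (tnth_nth false) -Eh; congr (h (g i _)).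
  apply: (@eq_from_nth _ false).
    by rewrite size_tuple size_takel // size_tuple ltnW.
  move=> u; rewrite size_tuple => hu.
  rewrite (nth_take _ hu) -(tnth_nth false (Defs.prefix xi i) (Ordinal hu)) /Defs.prefix tnth_mktuple.
  by rewrite (tnth_nth false).
by split; apply: key.
Qed.


Lemma rst_sub V x y : rst V x y `<=` V.
Proof. by move=> h []. Qed.

Variable K : nat.

Definition phi V W : nat := \max_(i < K.+1 | `[< Dg V W i >]) (i : nat).+1.

Lemma phi_le V W : (phi V W <= K.+1)%N.
Proof. by apply/bigmax_leqP => i _; exact: ltn_ord. Qed.

Lemma phi_ge V W i : Dg V W i -> (i <= K)%N -> (i.+1 <= phi V W)%N.
Proof.
move=> D hi.
have := @leq_bigmax_cond _ (fun i : 'I_K.+1 => `[< Dg V W i >]) (fun i : 'I_K.+1 => (i : nat).+1) (Ordinal (hi : (i < K.+1)%N)).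
by apply; apply/asboolP.
Qed.

Lemma phi_ex V W : (0 < phi V W)%N -> exists i, [/\ Dg V W i, (i <= K)%N & phi V W = i.+1].
Proof.
move=> hp.
case: (pickP (fun i : 'I_K.+1 => `[< Dg V W i >])) => [i0 Hi0 | none]; last first.
  by move: hp; rewrite /phi big_pred0.
have cA : (0 < #|[pred i : 'I_K.+1 | `[< Dg V W i >]]|)%N by apply/card_gt0P; exists i0.
have [i /= /asboolP Di E] := @eq_bigmax_cond _ [pred i : 'I_K.+1 | `[< Dg V W i >]] (fun i : 'I_K.+1 => (i : nat).+1) cA.
exists i; split; [exact: Di | by rewrite -ltnS | exact: E].
Qed.

Lemma phi_mono V W V' W' : V `<=` V' -> W `<=` W' -> (phi V W <= phi V' W')%N.
Proof.
move=> sV sW; apply/bigmax_leqP => i /asboolP D.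
apply: phi_ge; first exact: Dg_mono D.
by rewrite -ltnS.
Qed.

Definition soa V W x : bool := (phi (rst V x false) (rst W x false) < phi V W)%N.

Lemma soa_dec V W x : (forall j, Dg V W j -> (j <= K)%N) -> Dg V W 0 ->
  (phi (rst V x (~~ soa V W x)) (rst W x (~~ soa V W x)) < phi V W)%N.
Proof.
move=> HK D0; rewrite /soa; case: (ltnP (phi (rst V x false) (rst W x false)) (phi V W)) => [//|E] /=.
rewrite ltnNge; apply/negP => ET.
have p1 : (0 < phi V W)%N by apply: leq_trans (phi_ge D0 (leq0n _)).
have mF := phi_mono (@rst_sub V x false) (@rst_sub W x false).
have mT := phi_mono (@rst_sub V x true) (@rst_sub W x true).
have eF : phi (rst V x false) (rst W x false) = phi V W by apply/eqP; rewrite eqn_leq mF.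
have eT : phi (rst V x true) (rst W x true) = phi V W by apply/eqP; rewrite eqn_leq mT.
have pF : (0 < phi (rst V x false) (rst W x false))%N by rewrite eF.
have [i [Di _ Ei]] := phi_ex pF.
have pT : (0 < phi (rst V x true) (rst W x true))%N by rewrite eT.
have [i' [Di' _ Ei']] := phi_ex pT.
have ii : i' = i by apply/succn_inj; rewrite -Ei' -Ei eF eT.
subst i'.
have D1 := Dg_comb Di Di'.
have := phi_ge D1 (HK _ D1).
by rewrite -eF Ei ltnn.
Qed.

End Comb.

Section Expert.
Variable X : Type.
Variables (S B : set (hyp X)) (K : nat).
Notation phi := (phi K).
Notation soa := (soa K).

Definition step (F : nat -> bool) (i : nat) (x : X) (VW : set (hyp X) * set (hyp X)) :=
  if F i then (rst VW.1 x (~~ soa VW.1 VW.2 x), rst VW.2 x (~~ soa VW.1 VW.2 x)) else VW.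

Fixpoint stA F i (xs : seq X) VW :=
  match xs with [::] => VW | x :: xs' => stA F i.+1 xs' (step F i x VW) end.

Definition expert F (pre : seq (X * bool)) (x : X) : bool :=
  let VW := stA F 0 (map fst pre) (S, B) in soa VW.1 VW.2 x (+) F (size pre).

Fixpoint mist (P : seq (X * bool) -> X -> bool) pre s : nat :=
  match s with [::] => 0 | p :: s' => (P pre p.1 != p.2) + mist P (rcons pre p) s' end.

Definition bcnt (b : hyp X) (s : seq (X * bool)) : nat := \sum_(p <- s) (b p.1 != Some p.2).

Lemma stA_rcons F i xs x VW : stA F i (rcons xs x) VW = step F (i + size xs) x (stA F i xs VW).
Proof. by elim: xs i VW => [|y xs IH] i VW /=; rewrite ?addn0 // IH ?addSn ?addnS. Qed.

Lemma stA_ext F G i xs VW : (forall u, (u < i + size xs)%N -> F u = G u) ->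
  stA F i xs VW = stA G i xs VW.
Proof.
elim: xs i VW => [|y xs IH] i VW //= H.
rewrite IH; last by move=> u hu; apply: H; rewrite -addSnnS.
by rewrite /step H // addnS ltnS leq_addr.
Qed.

Lemma stA_sub F i xs VW : (stA F i xs VW).1 `<=` VW.1 /\ (stA F i xs VW).2 `<=` VW.2.
Proof.
elim: xs i VW => [|y xs IH] i VW /=; first by split.
have [h1 h2] := IH i.+1 (step F i y VW).
move: h1 h2; rewrite /step; case: (F i) => h1 h2 //=; split => h hh.
- by have [] := h1 _ hh.
- by have [] := h2 _ hh.
Qed.

Lemma mist_rcons P pre s p : mist P pre (rcons s p) = mist P pre s + (P (pre ++ s) p.1 != p.2).
Proof.
elim: s pre => [|q s IH] pre /=; first by rewrite cats0 addn0.
by rewrite IH -cats1 -catA cat1s addnA.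
Qed.

Lemma follow s b : S s -> B b -> (forall j, Dg S B j -> (j <= K)%N) ->
  forall sq pre F0, let VW := stA F0 0 (map fst pre) (S, B) in
  VW.1 s -> VW.2 b -> all (fun p => s p.1 == Some p.2) sq ->
  exists F, [/\ (forall u, (u < size pre)%N -> F u = F0 u),
     (forall u, (size pre + size sq <= u)%N -> F u = false),
     (\sum_(size pre <= u < size pre + size sq) F u <= (phi VW.1 VW.2).-1)%N &
     (mist (expert F) pre sq <= bcnt b sq)%N].
Proof.
move=> Ss Bb HK; elim=> [|[x y] sq IH] pre F0 VW Vs Wb /=.
  move=> _; exists (fun u => if (u < size pre)%N then F0 u else false); split.
  - by move=> u ->.
  - by move=> u; rewrite addn0 leqNgt => /negbTE ->.
  - by rewrite addn0 big_geq.
  - by [].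
move=> /andP[/eqP sx Hall].
set sa := soa VW.1 VW.2 x.
set c := (b x == Some y) && (sa != y).
set F1 := fun u => if u == size pre then c else F0 u.
have e1 : stA F1 0 (map fst pre) (S, B) = VW.
  by apply: stA_ext => u; rewrite add0n size_map /F1 => hu; rewrite ltn_eqF.
have HKV : forall j, Dg VW.1 VW.2 j -> (j <= K)%N.
  have [s1 s2] := stA_sub F0 0 (map fst pre) (S, B).
  by move=> j Dj; apply: HK; apply: Dg_mono Dj.
have D0 : Dg VW.1 VW.2 0 by apply: Dg0 Vs Wb.
set VW' := stA F1 0 (map fst (rcons pre (x, y))) (S, B).
have eVW' : VW' = if c then (rst VW.1 x (~~ sa), rst VW.2 x (~~ sa)) else VW.
  by rewrite /VW' map_rcons stA_rcons e1 add0n size_map /step /F1 eqxx.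
have [Vs' Wb'] : VW'.1 s /\ VW'.2 b.
  rewrite eVW'; case cE: c => //=.
  move: cE => /andP[/eqP bx /negPf nsa].
  have -> : ~~ sa = y by move: nsa; case: (sa); case: (y).
  by [].
have [F [HF1 HF2 HF3 HF4]] := IH (rcons pre (x, y)) F1 Vs' Wb' Hall.
have Fpre : forall u, (u < size pre)%N -> F u = F0 u.
  move=> u hu; rewrite HF1 ?size_rcons 1?ltnW //.
  by rewrite /F1 ltn_eqF.
have Fc : F (size pre) = c by rewrite HF1 ?size_rcons // /F1 eqxx.
exists F; split.
- exact: Fpre.
- by move=> u hu; apply: HF2; rewrite size_rcons addSnnS.
- rewrite big_ltn ?addnS ?ltnS ?leq_addr // Fc.
  move: HF3; rewrite size_rcons addSn -/VW' => HF3.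
  have p1 : (0 < phi VW'.1 VW'.2)%N by apply: phi_ge (Dg0 Vs' Wb') (leq0n K).
  move: HF3 p1; rewrite eVW'; case: (c) => /= HF3 p1.
    have := soa_dec x HKV D0; rewrite -/sa => lt.
    lia.
  lia.
- rewrite /= /bcnt big_cons /=.
  have -> : expert F pre x = sa (+) c.
    rewrite /expert Fc (@stA_ext F F0) //; last by move=> u; rewrite add0n size_map; apply: Fpre.
  apply: leq_add; last exact: HF4.
  rewrite /c; case: (b x == Some y) => /=; [by case: (sa); case: (y) | exact: leq_b1].
Qed.

End Expert.

Notation RR := Rdefinitions.R.

Section Learn.
Variable X : Type.
Implicit Types (L : learner X) (s : seq (X * bool)).

Lemma cumloss_rcons L pre s p :
  cumloss L pre (rcons s p) = cumloss L pre s + err (L (pre ++ s) p.1) p.2.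
Proof.
case: p => x0 y0.
elim: s pre => [|[x y] s IH] pre /=; first by rewrite cats0 addr0 add0r.
by rewrite IH -cats1 -catA cat1s addrA.
Qed.

Lemma err_ge0 p y : 0 <= p <= 1 -> 0 <= err p y.
Proof. by case/andP=> h0 h1; case: y => /=; rewrite ?subr_ge0. Qed.

Lemma err_le1 p y : 0 <= p <= 1 -> err p y <= 1.
Proof. by case/andP=> h0 h1; case: y => /=; rewrite ?gerBl. Qed.

Definition Ldet (P : seq (X * bool) -> X -> bool) : learner X :=
  fun h x => if P h x then 1 else 0.

Lemma cumloss_det P pre s : cumloss (Ldet P) pre s = (mist P pre s)%:R.
Proof.
elim: s pre => [|[x y] s IH] pre //=.
by rewrite IH natrD /Ldet /err; case: (P pre x); case: y => //=; rewrite ?subrr ?subr0.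
Qed.

Lemma mistakeH_bcnt (b : hyp X) s : mistakeH b s = (bcnt b s)%:R / (size s)%:R.
Proof.
rewrite /mistakeH /bcnt; congr (_ / _).
rewrite (big_morph _ (natrD _) (erefl (0%:R : RR))); apply: eq_bigr => p _.
by case: (b p.1 == Some p.2).
Qed.

Lemma Forall_all (h : hyp X) s : List.Forall (fun p => h p.1 = Some p.2) s ->
  all (fun p => h p.1 == Some p.2) s.
Proof. by elim=> //= p s' -> _ ->; rewrite eqxx. Qed.

Lemma CompOL_suff n S B eps L : is_learner L ->
  (forall (s : hyp X) (b : hyp X) sq, S s -> B b -> size sq = n -> all (fun p => s p.1 == Some p.2) sq ->
     mistakeL L sq <= mistakeH b sq + eps) -> CompOL n S B eps L.
Proof.
move=> HL H; split => // s sq Ss szq /Forall_all Hall.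
have -> : (mistakeL L sq)%:E = ((mistakeL L sq - eps)%:E + eps%:E)%E.
  by rewrite -EFinD subrK.
apply: leeD2r; apply: le_ereal_inf_tmp => _ [b Bb <-].
by rewrite lee_fin lerBlDr; apply: (H s).
Qed.

Lemma CompOL_use n S B eps L (s : hyp X) (b : hyp X) sq : CompOL n S B eps L -> S s -> B b -> size sq = n ->
  all (fun p => s p.1 == Some p.2) sq -> mistakeL L sq <= mistakeH b sq + eps.
Proof.
move=> [_ H] Ss Bb sz Hall.
have Hf : List.Forall (fun p => s p.1 = Some p.2) sq.
  by elim: sq Hall {sz} => //= p sq IH /andP[/eqP h1 /IH h2]; constructor.
have := H s sq Ss sz Hf.
move/le_trans => /(_ ((mistakeH b sq)%:E + eps%:E)%E); rewrite -EFinD lee_fin; apply.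
rewrite EFinD; apply: leeD2r; apply: ereal_inf_lbound; by exists b.
Qed.

Lemma mistakeH_ge0 (b : hyp X) s : 0 <= mistakeH b s.
Proof. by rewrite mistakeH_bcnt divr_ge0. Qed.

Lemma const_learner n (S B : set (hyp X)) : CompOL n S B (2^-1) (fun _ _ => 2^-1).
Proof.
apply: CompOL_suff => [h x|s b sq _ _ _ _].
  by apply/andP; split; [rewrite invr_ge0 | rewrite invf_le1 // ler1n].
have Hc : forall pre s', cumloss (fun _ _ => 2^-1) pre s' = (size s')%:R / 2 :> RR.
  move=> pre s'; elim: s' pre => [|[x y] s' IH] pre /=; first by rewrite mul0r.
  by rewrite IH; case: y => /=; rewrite -?natr1 ?mulrDl; field.
have h1 : mistakeL (fun _ _ => 2^-1) sq <= 2^-1.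
  rewrite /mistakeL Hc; case: (size sq) => [|k]; first by rewrite !mul0r invr_ge0.
  by rewrite mulrAC divff // ?mul1r // pnatr_eq0.
by apply: le_trans h1 _; rewrite lerDr; exact: mistakeH_ge0.
Qed.

End Learn.

Section Hedge.
Variables (X : Type) (E : finType) (pr : E -> RR) (P : E -> seq (X * bool) -> X -> bool) (be : RR).
Hypotheses (pr_gt0 : forall e, 0 < pr e) (pr_sum : \sum_e pr e = 1) (be_gt0 : 0 < be) (be_lt1 : be < 1).

Definition wt h e := pr e * be ^+ mist (P e) [::] h.
Definition Wsum h := \sum_e wt h e.
Definition hedge : learner X := fun h x => (\sum_e wt h e * (P e h x)%:R) / Wsum h.

Lemma wt_gt0 h e : 0 < wt h e.
Proof. by rewrite mulr_gt0 // exprn_gt0. Qed.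

Lemma wt_le_Wsum h e : wt h e <= Wsum h.
Proof.
rewrite /Wsum (bigD1 e) //=; apply: ler_wpDr => //.
by apply: sumr_ge0 => i _; apply: ltW; apply: wt_gt0.
Qed.

Lemma Wsum_gt0 h : 0 < Wsum h.
Proof.
case: (pickP (fun _ : E => true)) => [e _|none].
  exact: lt_le_trans (wt_gt0 h e) (wt_le_Wsum h e).
by move: pr_sum; rewrite big_pred0 // => /esym/eqP; rewrite oner_eq0.
Qed.

Lemma hedge_in h x : 0 <= hedge h x <= 1.
Proof.
have W0 := Wsum_gt0 h.
apply/andP; split.
  apply: divr_ge0; last exact: ltW.
  by apply: sumr_ge0 => e _; apply: mulr_ge0; [apply: ltW; apply: wt_gt0 | apply: ler0n].
rewrite ler_pdivrMr // mul1r; apply: ler_sum => e _.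
by case: (P e h x); rewrite ?mulr1 ?mulr0 //; apply: ltW; apply: wt_gt0.
Qed.

Lemma err_hedge h x y : err (hedge h x) y * Wsum h = \sum_e wt h e * (P e h x != y)%:R.
Proof.
have W0 : Wsum h != 0 by rewrite gt_eqF // Wsum_gt0.
case: y => /=; last first.
  rewrite /hedge divfK //; apply: eq_bigr => e _; by case: (P e h x).
rewrite mulrBl mul1r /hedge divfK // /Wsum -sumrB; apply: eq_bigr => e _.
by case: (P e h x) => /=; rewrite ?mulr1 ?mulr0 ?subrr ?subr0.
Qed.

Lemma Wsum_rcons h x y :
  Wsum (rcons h (x, y)) = Wsum h - (1 - be) * (err (hedge h x) y * Wsum h).
Proof.
rewrite err_hedge /Wsum mulr_sumr -sumrB; apply: eq_bigr => e _.
rewrite /wt mist_rcons cat0s exprD /=.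
by case: (P e h x != y) => /=; rewrite ?expr1 ?expr0 ?mulr1 ?mulr0 ?subr0 //; ring.
Qed.

Lemma Wsum_bound h : Wsum h <= expR (- ((1 - be) * cumloss hedge [::] h)).
Proof.
elim/last_ind: h => [|h [x y] IH].
  rewrite /= mulr0 oppr0 exp.expR0 /Wsum -pr_sum le_eqVlt; apply/orP; left; apply/eqP.
  by apply: eq_bigr => e _; rewrite /wt /= expr0 mulr1.
rewrite Wsum_rcons cumloss_rcons cat0s /=.
set e := err (hedge h x) y.
have e01 : 0 <= e <= 1 by rewrite err_ge0 ?err_le1 ?hedge_in.
have -> : Wsum h - (1 - be) * (e * Wsum h) = Wsum h * (1 - (1 - be) * e) by ring.
rewrite (_ : - ((1 - be) * (cumloss hedge [::] h + e)) = - ((1 - be) * cumloss hedge [::] h) + - ((1 - be) * e)); last by ring.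
rewrite exp.expRD.
apply: ler_pM.
- exact: ltW (Wsum_gt0 h).
- case/andP: e01 => e0 e1; rewrite subr_ge0.
  have : (1 - be) * e <= (1 - be) * 1 by rewrite ler_wpM2l // subr_ge0 ltW.
  by move/le_trans; apply; rewrite mulr1 gerBl ltW.
- exact: IH.
- by have := expR_ge1Dx (- ((1 - be) * e)); rewrite -mulNr mulNr.
Qed.

Lemma hedge_regret h e :
  pr e * be ^+ mist (P e) [::] h <= expR (- ((1 - be) * cumloss hedge [::] h)).
Proof. exact: le_trans (wt_le_Wsum h e) (Wsum_bound h). Qed.

End Hedge.

Section Adv.
Variables (X : Type) (L : learner X) (j : nat) (g : 'I_j.+1 -> seq bool -> X).

Definition ax (u : nat) (ys : seq bool) : X :=
  if (insub u : option 'I_j.+1) is Some i then g i ys else g ord0 [::].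
Definition ay (u : nat) (h : seq (X * bool)) : bool :=
  if (u < j.+1)%N then (L h (ax u (map snd h)) <= 2^-1) else nth false (map snd h) 0.
Fixpoint advh (u : nat) : seq (X * bool) :=
  if u is u'.+1 then rcons (advh u') (ax u' (map snd (advh u')), ay u' (advh u')) else [::].

Lemma size_advh u : size (advh u) = u.
Proof. by elim: u => //= u IH; rewrite size_rcons IH. Qed.

Lemma advh_prefix u v : (u <= v)%N -> take u (advh v) = advh u.
Proof.
elim: v => [|v IH]; first by rewrite leqn0 => /eqP ->.
rewrite leq_eqVlt => /orP[/eqP -> | ]; first by rewrite take_oversize // size_advh.
rewrite ltnS => uv /=; rewrite -cats1 takel_cat ?size_advh //; exact: IH.
Qed.

Lemma nth_advh n u d : (u < n)%N ->
  nth d (advh n) u = (ax u (map snd (advh u)), ay u (advh u)).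
Proof.
move=> un; rewrite -(nth_take d (ltnSn u)) advh_prefix //=.
by rewrite nth_rcons size_advh ltnn eqxx.
Qed.

Variable n : nat.
Let ys := map snd (advh n).
Let xi := mkseq (fun u => nth false ys u) j.+1.

Lemma size_xi : size xi = j.+1.
Proof. by rewrite size_mkseq. Qed.

Lemma map_advh u : (u <= n)%N -> map snd (advh u) = take u ys.
Proof. by move=> un; rewrite /ys -map_take advh_prefix. Qed.

Lemma take_xi u : (u <= j.+1)%N -> (u <= n)%N -> take u xi = take u ys.
Proof.
move=> uj un; apply: (@eq_from_nth _ false).
  by rewrite !size_takel // ?size_mkseq // /ys size_map size_advh.
move=> i; rewrite size_takel ?size_mkseq // => iu.
by rewrite !nth_take // nth_mkseq // (leq_trans iu).
Qed.

Lemma advh_real (h : hyp X) :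
  (forall i : 'I_j.+1, h (g i (take i xi)) = Some (nth false xi i)) ->
  all (fun p => h p.1 == Some p.2) (advh n).
Proof.
move=> Hh; apply/(all_nthP (g ord0 [::], false)) => u; rewrite size_advh => un.
have e2 : ay u (advh u) = nth false ys u.
  by rewrite /ys (nth_map (g ord0 [::], false)) ?size_advh // nth_advh.
have e1 : (nth (g ord0 [::], false) (advh n) u).1 = ax u (take u ys).
  rewrite (nth_advh (g ord0 [::], false) un).
  rewrite map_advh; last exact: ltnW.
  exact: erefl.
have e3 : (nth (g ord0 [::], false) (advh n) u).2 = nth false ys u.
  rewrite (nth_advh (g ord0 [::], false) un); exact: e2.
rewrite e1 e3; apply/eqP.
case: (ltnP u j.+1) => uj.
  have -> : ax u (take u ys) = g (Ordinal uj) (take u ys).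
    rewrite /ax insubT; exact: erefl.
  rewrite -(take_xi (ltnW uj) (ltnW un)).
  have := Hh (Ordinal uj); rewrite nth_mkseq; first exact.
  exact: uj.
move: e2; rewrite /ay.
have nuj : (u < j.+1)%N = false by rewrite ltnNge uj.
rewrite nuj (map_advh (ltnW un)) => e2.
have u0 : (0 < u)%N by apply: leq_trans uj.
have -> : ax u (take u ys) = g ord0 [::].
  rewrite /ax insubF; [exact: erefl | exact: nuj].
rewrite -e2 (nth_take _ u0).
have H0 := Hh ord0.
change (h (g ord0 (take 0 xi)) = Some (nth false xi 0)) in H0.
rewrite take0 nth_mkseq in H0; first exact: H0.
exact: ltn0Sn.
Qed.

Lemma cum_advh u : is_learner L -> (minn u j.+1)%:R / 2 <= cumloss L [::] (advh u).
Proof.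
move=> HL; elim: u => [|u IH].
  rewrite min0n mul0r; exact: lexx.
have -> : advh u.+1 = rcons (advh u) (ax u (map snd (advh u)), ay u (advh u)) by [].
rewrite cumloss_rcons cat0s.
set x := ax u (map snd (advh u)).
have e0 : 0 <= err (L (advh u) x) (ay u (advh u)) by apply: err_ge0; apply: HL.
case: (ltnP u j.+1) => uj.
  have -> : minn u.+1 j.+1 = (minn u j.+1).+1 by lia.
  rewrite -natr1 mulrDl; apply: lerD; first exact: IH.
  rewrite /ay uj -/x; case: (leP (L (advh u) x) 2^-1) => hp /=.
    lra.
  lra.
have -> : minn u.+1 j.+1 = minn u j.+1 by lia.
by rewrite -(addr0 (_ / 2)); apply: lerD.
Qed.

Lemma lower_adv (S B : set (hyp X)) eps : (0 < n)%N -> CompOL n S B eps L ->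
  shatg S g -> shatg B g -> (minn n j.+1)%:R / (2 * n%:R) <= eps.
Proof.
move=> n0 HC hS hB.
have [s Ss Hs] := hS xi size_xi.
have [b Bb Hb] := hB xi size_xi.
have := CompOL_use HC Ss Bb (size_advh n) (advh_real Hs).
have -> : mistakeH b (advh n) = 0.
  have bc : bcnt b (advh n) = 0%N.
    move: (advh_real Hb); elim: (advh n) => [|p r IH]; first by rewrite /bcnt big_nil.
    by rewrite /bcnt big_cons /= => /andP[-> /IH].
  by rewrite mistakeH_bcnt bc mul0r.
rewrite add0r; apply: le_trans.
rewrite /mistakeL size_advh invfM mulrA; apply: ler_wpM2r.
  by rewrite invr_ge0 ler0n.
by apply: cum_advh; case: HC.
Qed.

End Adv.

Definition cb (q : RR) (b : bool) : RR := if b then q else 1 - q.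

Lemma prior_sum m (q : RR) : \sum_(f : {ffun 'I_m -> bool}) \prod_i cb q (f i) = 1.
Proof.
rewrite -(bigA_distr_bigA (fun (i : 'I_m) (b : bool) => cb q b)) /=.
rewrite big1 // => i _; rewrite big_bool /cb /=; exact: subrKC.
Qed.

Lemma prior_lb m (q : RR) (F : nat -> bool) : 0 <= q <= 1 ->
  q ^+ (\sum_(i < m) F i)%N * (1 - q) ^+ m <= \prod_(i < m) cb q (F i).
Proof.
case/andP=> q0 q1; have q1' : 0 <= 1 - q by rewrite subr_ge0.
elim: m => [|m IH]; first by rewrite !big_ord0 expr0 mulr1.
rewrite big_ord_recr big_ord_recr /=.
have -> : q ^+ (\sum_(i < m) F (widen_ord (leqnSn m) i) + F (@ord_max m))%N * (1 - q) ^+ m.+1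
   = (q ^+ (\sum_(i < m) F i)%N * (1 - q) ^+ m) * (q ^+ F m * (1 - q)).
  by rewrite exprD exprS /=; ring.
apply: ler_pM => //.
- by rewrite mulr_ge0 // exprn_ge0.
- by rewrite mulr_ge0 // exprn_ge0.
- rewrite /cb; case: (F m) => /=; last by rewrite expr0 mul1r.
  by rewrite expr1 -[X in _ <= X]mulr1 ler_wpM2l // gerBl.
Qed.

Definition FF m (f : {ffun 'I_m -> bool}) : nat -> bool :=
  fun u => if (insub u : option 'I_m) is Some i then f i else false.

Lemma FF_eq m (F : nat -> bool) : (forall u, (m <= u)%N -> F u = false) ->
  FF [ffun i : 'I_m => F i] = F.
Proof.
move=> H; apply: funext => u; rewrite /FF; case: insubP => [i iu <-|].
  by rewrite ffunE.
by rewrite -leqNgt => /H ->.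
Qed.

Lemma cumloss_ge0 X (L : learner X) pre s : is_learner L -> 0 <= cumloss L pre s.
Proof.
move=> HL; elim: s pre => [|[x y] s IH] pre /=; first exact: lexx.
by apply: addr_ge0; [apply: err_ge0; apply: HL | apply: IH].
Qed.

Section Final.
Variable X : Type.
Variables (S B : set (hyp X)) (n : nat).

Definition Dt j := exists t : tree X j, shattered S t /\ shattered B t.

Lemma Lmem j : Dt j -> ((j%:R : RR)%:E <= Ldim S B)%E.
Proof. by move=> Dj; apply: ereal_sup_ubound; exists j. Qed.

Lemma Lub M : (forall j, Dt j -> ((j%:R : RR)%:E <= M)%E) -> (Ldim S B <= M)%E.
Proof. by move=> H; apply: ge_ereal_sup => _ [j Dj <-]; apply: H. Qed.

Lemma es_ub eps L : 0 <= eps -> CompOL n S B eps L -> epsstar n S B <= eps.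
Proof.
move=> e0 HC; apply: ge_inf; last by split => //; exists L.
by exists 0 => x [].
Qed.

Lemma es_lb a : (forall eps L, 0 <= eps -> CompOL n S B eps L -> a <= eps) -> a <= epsstar n S B.
Proof.
move=> H; apply: lb_le_inf.
  exists 2^-1; split; first by rewrite invr_ge0.
  by exists (fun _ _ => 2^-1); apply: const_learner.
by move=> x [x0 [L HL]]; apply: H HL.
Qed.

Lemma bcnt_le (b : hyp X) s : (bcnt b s <= size s)%N.
Proof.
elim: s => [|p s IH]; first by rewrite /bcnt big_nil.
by rewrite /bcnt big_cons /= -add1n; apply: leq_add => //; apply: leq_b1.
Qed.

Lemma Dg_D' j : Dt j -> Dg S B j.
Proof. exact: D_Dg. Qed.

Lemma part2 : (0 < n)%N -> (Ldim S B <= 0%:E)%E -> epsstar n S B <= 0.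
Proof.
move=> n0 Hm.
have HK : forall j, Dg S B j -> (j <= 0)%N.
  move=> j /Dg_D Dj; have := le_trans (Lmem Dj) Hm; rewrite lee_fin => h.
  by rewrite -(ler_nat RR) (le_trans h).
set P := expert S B 0 (fun _ => false).
apply: (@es_ub 0 (Ldet P)) => //.
apply: CompOL_suff.
  by move=> h x; rewrite /Ldet; case: (P h x); rewrite ?lexx ?ler01.
move=> s b sq Ss Bb szq Hall.
have := @follow X S B 0 s b Ss Bb HK sq [::] (fun _ => false) Ss Bb Hall.
case=> F [_ HF2 HF3 HF4].
have F0 : F = fun _ => false.
  apply: funext => u; case: (ltnP u (size sq)) => hu; last by apply: HF2.
  have : (\sum_(0 <= v < size sq) F v <= 0)%N.
    apply: leq_trans HF3 _; have := phi_le 0 S B; by case: (phi 0 S B) => [|[]].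
  rewrite leqn0 big_mkord sum_nat_eq0 => /forallP /(_ (Ordinal hu)) /=.
  by case: (F u).
rewrite F0 in HF4.
rewrite addr0 /mistakeL /Ldet cumloss_det mistakeH_bcnt.
by apply: ler_wpM2r; [rewrite invr_ge0 ler0n | rewrite ler_nat].
Qed.

Lemma tree_lb j : (0 < n)%N -> Dt j -> (minn n j)%:R / (2 * n%:R) <= epsstar n S B.
Proof.
move=> n0 Dj; apply: es_lb => eps L e0 HC.
case: j Dj => [|j'] Dj; first by rewrite minn0 mul0r.
have [g [hS hB]] := Dg_D' Dj.
exact: (lower_adv n0 HC hS hB).
Qed.

Lemma part1 : (0 < n)%N ->
  (Order.min (2^-1)%:E (Ldim S B * ((2 * n%:R)^-1)%:E) <= (epsstar n S B)%:E)%E.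
Proof.
move=> n0; set e := epsstar n S B.
have n0R : (0 : RR) < n%:R by rewrite ltr0n.
case: (lerP 2^-1 e) => he.
  by rewrite ge_min; apply/orP; left; rewrite lee_fin.
rewrite ge_min; apply/orP; right.
have Hm : (Ldim S B <= (e * (2 * n%:R))%:E)%E.
  apply: Lub => j Dj; rewrite lee_fin.
  have := tree_lb n0 Dj.
  case: (leqP n j) => nj.
    rewrite -/e => h; exfalso.
    have : 2^-1 <= e.
      apply: le_trans h; rewrite le_eqVlt; apply/orP; left; apply/eqP; field.
      by rewrite gt_eqF.
    by rewrite leNgt he.
  by rewrite -/e ler_pdivrMr // mulr_gt0.
have c0 : (0 <= ((2 * n%:R)^-1)%:E :> \bar RR)%E by rewrite lee_fin invr_ge0 mulr_ge0 // ltW.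
have := lee_wpmul2r c0 Hm; rewrite -EFinM mulrK //.
by rewrite unitfE mulf_neq0 // gt_eqF.
Qed.

End Final.

Section P3.
Variable X : Type.
Variables (S B : set (hyp X)) (n k : nat).
Hypotheses (n0 : (0 < n)%N) (k0 : (0 < k)%N) (HK : forall j, Dg S B j -> (j <= k)%N).

Definition rho : RR := (n%:R + k%:R) / k%:R.
Definition Lam : RR := k%:R * (ln rho + 1).
Definition sig : RR := Num.sqrt (Lam / n%:R).

Lemma nR_gt0 : (0 : RR) < n%:R. Proof. by rewrite ltr0n. Qed.
Lemma kR_gt0 : (0 : RR) < k%:R. Proof. by rewrite ltr0n. Qed.

Lemma rho_ge1 : 1 <= rho.
Proof. by rewrite /rho ler_pdivlMr ?kR_gt0 // mul1r lerDr ler0n. Qed.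

Lemma rho_gt0 : 0 < rho.
Proof. exact: lt_le_trans ltr01 rho_ge1. Qed.

Lemma Lam_gt0 : 0 < Lam.
Proof.
rewrite /Lam mulr_gt0 ?kR_gt0 //.
by apply: lt_le_trans (ltr01) _; rewrite lerDr ln_ge0 // rho_ge1.
Qed.

Lemma sig_gt0 : 0 < sig.
Proof. by rewrite /sig sqrtr_gt0 divr_gt0 ?Lam_gt0 ?nR_gt0. Qed.

Lemma sig2 : sig ^+ 2 * n%:R = Lam.
Proof.
rewrite /sig sqr_sqrtr ?divfK //; first by rewrite gt_eqF // nR_gt0.
by rewrite divr_ge0 // ltW ?Lam_gt0 ?nR_gt0.
Qed.

Lemma part3_hedge : sig <= 1 -> epsstar n S B <= 3 * sig.
Proof.
move=> s1.
have nR0 := nR_gt0; have kR0 := kR_gt0; have sg0 := sig_gt0.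
set q : RR := k%:R / (n%:R + k%:R).
have nk0 : (0 : RR) < n%:R + k%:R by rewrite addr_gt0.
have q0 : 0 < q by rewrite divr_gt0.
have q1 : q < 1 by rewrite ltr_pdivrMr // mul1r ltrDr.
set be := expR (- sig).
pose pr := fun f : {ffun 'I_n -> bool} => \prod_i cb q (f i).
pose P := fun f : {ffun 'I_n -> bool} => expert S B k (FF f).
have pr_gt0 : forall f, 0 < pr f.
  move=> f; apply: prodr_gt0 => i _; rewrite /cb; case: (f i) => //.
  by rewrite subr_gt0.
have pr_sum : \sum_f pr f = 1 := prior_sum n q.
have be0 : 0 < be := expR_gt0 _.
have be1 : be < 1 by rewrite expR_lt1 oppr_lt0.
apply: (@es_ub _ S B n (3 * sig) (hedge pr P be)).
  by rewrite mulr_ge0 // ltW.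
apply: CompOL_suff; first by move=> h x; apply: hedge_in.
move=> s b sq Ss Bb szq Hall.
have [F [_ HF2 HF3 HF4]] := @follow X S B k s b Ss Bb HK sq [::] (fun _ => false) Ss Bb Hall.
set f := [ffun i : 'I_n => F i].
have FFf : FF f = F by apply: FF_eq => u hu; apply: HF2; rewrite /= szq add0n.
have reg := @hedge_regret X _ pr P be pr_gt0 pr_sum be0 be1 sq f.
have PM : mist (P f) [::] sq = mist (expert S B k F) [::] sq by rewrite /P FFf.
rewrite PM in reg.
set cum := cumloss (hedge pr P be) [::] sq in reg *.
set M := mist (expert S B k F) [::] sq in reg HF4.
have HMn : (M%:R : RR) <= n%:R by rewrite ler_nat -szq (leq_trans HF4) // bcnt_le.
have HMb : (M%:R : RR) <= (bcnt b sq)%:R by rewrite ler_nat.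
have sumk : (\sum_(i < n) F i <= k)%N.
  move: HF3; rewrite /= add0n szq big_mkord => HF3.
  apply: leq_trans HF3 _; have := phi_le k S B; by case: (phi k S B).
have prf : q ^+ k * (1 - q) ^+ n <= pr f.
  apply: le_trans (_ : q ^+ (\sum_(i < n) F i)%N * (1 - q) ^+ n <= _).
    apply: ler_wpM2r; first by rewrite exprn_ge0 // subr_ge0 ltW.
    by apply: ler_wiXn2l; rewrite ?ltW.
  rewrite /pr; under eq_bigr do rewrite ffunE.
  by apply: prior_lb; rewrite !ltW.
have qk : q ^+ k = expR (- (k%:R * ln rho)).
  have -> : q = rho^-1 by rewrite /q /rho invf_div.
  rewrite -mulrN expRM_natl expRN lnK //; exact: rho_gt0.
have qn : expR (- k%:R) <= (1 - q) ^+ n.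
  have e1 : 1 - q = (1 + k%:R / n%:R)^-1.
    by rewrite /q; field; rewrite !gt_eqF.
  have p1 : 0 < 1 + k%:R / n%:R :> RR by rewrite addr_gt0 // divr_gt0.
  rewrite e1 exprVn expRN lef_pV2 ?posrE ?expR_gt0 ?exprn_gt0 //.
  have h := expR_ge1Dx (k%:R / n%:R : RR).
  have Hx := @lerXn2r RR n (1 + k%:R / n%:R) (expR (k%:R / n%:R)).
  have a1 : (1 + k%:R / n%:R : RR) \is Num.nneg by rewrite nnegrE ltW.
  have a2 : expR (k%:R / n%:R : RR) \is Num.nneg by rewrite nnegrE ltW // expR_gt0.
  have := Hx a1 a2 h; rewrite -expRM_natl (_ : n%:R * (k%:R / n%:R) = k%:R) //.
  by field; rewrite gt_eqF.
have beM : be ^+ M = expR (M%:R * (- sig)) by rewrite expRM_natl.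
have lhs : expR (- (Lam + sig * M%:R)) <= pr f * be ^+ M.
  rewrite beM (_ : - (Lam + sig * M%:R) = (- (k%:R * ln rho) + - k%:R) + M%:R * (- sig)); last first.
    by rewrite /Lam; ring.
  rewrite !exp.expRD; apply: ler_wpM2r; first exact: ltW (expR_gt0 _).
  apply: le_trans prf; rewrite qk; apply: ler_wpM2l => //; exact: ltW (expR_gt0 _).
have key : (1 - be) * cum <= Lam + sig * M%:R.
  by have := le_trans lhs reg; rewrite ler_expR lerN2.
have beb : be <= (1 + sig)^-1.
  rewrite /be expRN lef_pV2 ?posrE ?expR_gt0 ?addr_gt0 //; exact: expR_ge1Dx.
have cum0 : 0 <= cum by apply: cumloss_ge0; move=> h x; apply: hedge_in.
have key2 : cum <= (1 + sig) * (sig * n%:R + M%:R).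
  have h1 : sig / (1 + sig) * cum <= sig ^+ 2 * n%:R + sig * M%:R.
    rewrite sig2; apply: le_trans key; apply: ler_wpM2r => //.
    rewrite (_ : sig / (1 + sig) = 1 - (1 + sig)^-1); last by field; rewrite gt_eqF // addr_gt0.
    by rewrite lerB.
  have s1p : 0 < 1 + sig by rewrite addr_gt0.
  rewrite -(ler_pM2l s1p) in h1.
  rewrite (_ : (1 + sig) * (sig / (1 + sig) * cum) = sig * cum) in h1; last by field; rewrite gt_eqF.
  rewrite -(ler_pM2l sg0); apply: le_trans h1 _; rewrite le_eqVlt; apply/orP; left; apply/eqP; ring.
have f1 : 0 <= sig * (1 - sig) * n%:R.
  by apply: mulr_ge0; [apply: mulr_ge0; [exact: ltW | rewrite subr_ge0] | exact: ler0n].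
have f2 : 0 <= sig * (n%:R - M%:R).
  by apply: mulr_ge0; [exact: ltW | rewrite subr_ge0].
have fin : cum <= M%:R + 3 * sig * n%:R.
  apply: le_trans key2 _.
  have -> : (1 + sig) * (sig * n%:R + M%:R) = M%:R + 3 * sig * n%:R - sig * (1 - sig) * n%:R - sig * (n%:R - M%:R) by ring.
  lra.
rewrite /mistakeL mistakeH_bcnt szq ler_pdivrMr // mulrDl divfK ?gt_eqF //.
apply: le_trans fin _; rewrite lerD2r; exact: HMb.
Qed.

Lemma part3_bound :
  epsstar n S B <= 6 * Num.sqrt (k%:R / n%:R * log2 ((2 * k%:R + n%:R) / k%:R)).
Proof.
have nR0 := nR_gt0; have kR0 := kR_gt0; have sg0 := sig_gt0.
set r : RR := (2 * k%:R + n%:R) / k%:R.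
set Xv := k%:R / n%:R * log2 r.
have r2 : 2 <= r by rewrite /r ler_pdivlMr // lerDl ler0n.
have r0 : 0 < r by apply: lt_le_trans r2.
have l2p : 0 < ln (2 : RR) by apply: ln_gt0; rewrite ltr1n.
have l21 : ln (2 : RR) <= 1.
  rewrite -[X in _ <= X](expRK 1) ler_ln ?posrE ?expR_gt0 //.
  by have := expR_ge1Dx (1 : RR).
have lr2 : ln (2 : RR) <= ln r by rewrite ler_ln ?posrE.
have lg1 : 1 <= log2 r by rewrite /log2 ler_pdivlMr // mul1r.
have lnr : ln r <= log2 r.
  have l2n : ln (2 : RR) != 0 by rewrite gt_eqF.
  rewrite /log2 -[X in X <= _](divfK l2n) -[X in _ <= X]mulr1 ler_wpM2l //.
  by apply: divr_ge0; [apply: le_trans lr2; exact: ltW | exact: ltW].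
have lrho : ln rho <= ln r.
  rewrite ler_ln ?posrE ?rho_gt0 // /rho /r ler_pM2r ?invr_gt0 //.
  lra.
have LamX : Lam / n%:R <= 2 * Xv.
  rewrite ler_pdivrMr // /Xv /Lam.
  have : k%:R * (ln rho + 1) <= k%:R * (2 * log2 r).
    by apply: ler_wpM2l; [exact: ltW | lra].
  move/le_trans; apply; rewrite le_eqVlt; apply/orP; left; apply/eqP; field.
  by rewrite gt_eqF.
have Lam0 : 0 <= Lam / n%:R by rewrite divr_ge0 // ltW ?Lam_gt0.
have X0 : 0 <= Xv.
  apply: mulr_ge0; first by rewrite divr_ge0 ?ler0n.
  by apply: le_trans lg1; exact: ler01.
case: (lerP sig 1) => hs.
  apply: le_trans (part3_hedge hs) _.
  have : sig <= 2 * Num.sqrt Xv.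
    have -> : (2 : RR) = Num.sqrt (2 ^+ 2) by rewrite sqrtr_sqr ger0_norm.
    rewrite -sqrtrM ?exprn_ge0 // /sig ler_sqrt; last by rewrite mulr_ge0 // exprn_ge0.
    by apply: le_trans LamX _; lra.
  lra.
have h1 : 1 < Lam / n%:R by rewrite -sig2 mulrK ?unitfE ?gt_eqF // expr2 -[1]mulr1 ltr_pM // ltW.
have h2 : 2^-1 <= Num.sqrt Xv.
  have -> : (2^-1 : RR) = Num.sqrt ((2^-1) ^+ 2) by rewrite sqrtr_sqr ger0_norm // invr_ge0.
  by rewrite ler_sqrt //; lra.
have he : epsstar n S B <= 2^-1.
  by apply: es_ub; [rewrite invr_ge0 | apply: const_learner].
lra.
Qed.

End P3.

Lemma HK_of X (S B : set (hyp X)) k : Ldim S B = ((k%:R : RR))%:E -> forall j, Dg S B j -> (j <= k)%N.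
Proof.
move=> Hm j /Dg_D Dj; have := Lmem Dj; rewrite Hm lee_fin.
by rewrite ler_nat.
Qed.

Theorem theorem8p7 :
  exists C : Rdefinitions.R, 0 < C /\
  forall (X : Type) (S B : set (hyp X)) (n : nat), (0 < n)%N ->
    let m := Ldim S B in
    let e := epsstar n S B in
    (Order.min (2^-1)%:E (m * ((2 * n%:R)^-1)%:E) <= e%:E)%E /\
    ((m <= 0%:E)%E -> e <= 0) /\
    (forall k : nat, (0 < k)%N -> m = (k%:R)%:E ->
       e <= C * Num.sqrt (k%:R / n%:R * log2 ((2 * k%:R + n%:R) / k%:R))).
Proof.
exists 6; split; first by rewrite ltr0n.
move=> X S B n n0 m e; rewrite /m /e.
split; first exact: part1.
split; first exact: part2.
move=> k k0 Hm.
exact: (part3_bound n0 k0 (HK_of Hm)).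
Qed.
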